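(* Let $f_{\theta}:\mathbb{R}^d\to\mathbb{R}$ be differentiable, let $\mathbf{x}_1,\ldots,\mathbf{x}_n\in\mathbb{R}^d$ be data points with coordinates $\mathbf{x}_i=(x_{1i},\ldots,x_{di})$, and fix $j\in\{1,\ldots,d\}$ with $\sum_{i=1}^n x_{ji}^2>0$. Suppose $f_\theta$ is weakly invariant to the $j$-th feature with constant $C>0$, i.e. $\left|\frac{\partial f_\theta(\mathbf{x})}{\partial x_j}\right|<C$ for all $\mathbf{x}\in\mathbb{R}^d$. Consider the MIND objective with gating transformation and inner-product similarity regularization, $$L(\mathbf{g})=\frac{1}{n}\sum_{i=1}^n\Big[\,\big|f_\theta(\mathbf{x}_i)-f_\theta(\mathbf{g}\odot\mathbf{x}_i)\big|+\lambda\,(\mathbf{g}\odot\mathbf{x}_i)^{\top}\mathbf{x}_i\Big],\qquad \mathbf{g}\in[0,1]^d .$$ If $\lambda\geq C\,\frac{\sum_{i=1}^n|x_{ji}|}{\sum_{i=1}^n x_{ji}^2}$, then every global minimizer $\mathbf{g}^*$ of $L$ over $[0,1]^d$ satisfies $g^*_j=0$.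
   Context: $\odot$ denotes the element-wise (Hadamard) product. The vector $\mathbf{g}\in[0,1]^d$ parametrizes the gating transformation $\mathbf{x}\mapsto\mathbf{g}\odot\mathbf{x}$; its entries $g_j$ are called MIND scores. $f_\theta$ is a fixed (pre-trained) prediction function and $\lambda>0$ is the regularization coefficient. *)

(* Defs.v *)
From Stdlib Require Import Reals.
From mathcomp Require Import ssreflect ssrfun ssrbool eqtype ssrnat seq choice fintype.
Set Implicit Arguments.
Open Scope R_scope.

Definition vec (d : nat) := 'I_d -> R.

Definition sumI (d : nat) (F : 'I_d -> R) : R :=
  foldr (fun k acc => F k + acc) 0 (enum 'I_d).

(* sum_{i=0}^{n-1} F i  (data points indexed 0..n-1) *)
Fixpoint sumN (n : nat) (F : nat -> R) : R :=
  match n with O => 0 | S m => sumN m F + F m end.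

Definition hadamard (d : nat) (g x : vec d) : vec d := fun k => g k * x k.

Definition inner (d : nat) (u v : vec d) : R := sumI (fun k => u k * v k).

Definition upd (d : nat) (x : vec d) (j : 'I_d) (t : R) : vec d :=
  fun k => if k == j then t else x k.

Definition differentiable_at (d : nat) (f : vec d -> R) (x : vec d) : Prop :=
  exists v : vec d, forall eps, 0 < eps -> exists delta, 0 < delta /\
    forall h : vec d, (forall k, Rabs (h k) < delta) ->
      Rabs (f (fun k => x k + h k) - f x - inner v h)
        <= eps * sumI (fun k => Rabs (h k)).

Definition differentiable (d : nat) (f : vec d -> R) : Prop :=
  forall x, differentiable_at f x.

Definition weakly_invariant (d : nat) (f : vec d -> R) (j : 'I_d) (C : R) : Prop :=
  forall (x : vec d) (l : R),
    derivable_pt_lim (fun t => f (upd x j t)) (x j) l -> Rabs l < C.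

Definition in_box (d : nat) (g : vec d) : Prop := forall k, 0 <= g k <= 1.

Definition MIND_loss (d n : nat) (f : vec d -> R) (X : nat -> vec d) (lam : R)
    (g : vec d) : R :=
  / INR n * sumN n (fun i =>
     Rabs (f (X i) - f (hadamard g (X i))) + lam * inner (hadamard g (X i)) (X i)).

Definition global_minimizer (d n : nat) (f : vec d -> R) (X : nat -> vec d)
    (lam : R) (g : vec d) : Prop :=
  in_box g /\ forall g', in_box g' -> MIND_loss n f X lam g <= MIND_loss n f X lam g'.

(* Main.v *)
Require Import Defs.
From Stdlib Require Import Reals.
From mathcomp Require Import ssreflect ssrfun ssrbool eqtype ssrnat seq choice fintype.
Open Scope R_scope.
From Stdlib Require Import Lra FunctionalExtensionality ClassicalEpsilon.

Lemma foldr_diff (d : nat) (F G : 'I_d -> R) (j : 'I_d) (s : seq 'I_d) :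
  uniq s -> (forall k, k <> j -> F k = G k) ->
  foldr (fun k acc => F k + acc) 0 s - foldr (fun k acc => G k + acc) 0 s
  = if j \in s then F j - G j else 0.
Proof.
move=> Hu HFG; elim: s Hu => [|a s IH] /=; first lra.
move=> /andP [Ha Hu]; rewrite in_cons.
have -> : F a + foldr (fun k acc => F k + acc) 0 s - (G a + foldr (fun k acc => G k + acc) 0 s)
  = (F a - G a) + (foldr (fun k acc => F k + acc) 0 s - foldr (fun k acc => G k + acc) 0 s) by ring.
rewrite IH //.
case: (eqVneq j a) => [->|Hne] /=.
  by rewrite (negbTE Ha); lra.
rewrite HFG; last by move=> E; rewrite E eqxx in Hne.
case: (j \in s); lra.
Qed.

Lemma sumI_diff (d : nat) (F G : 'I_d -> R) (j : 'I_d) :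
  (forall k, k <> j -> F k = G k) -> sumI F - sumI G = F j - G j.
Proof.
move=> H; rewrite /sumI (@foldr_diff d F G j) ?enum_uniq // mem_enum //.
Qed.

Lemma sumI_single (d : nat) (F : 'I_d -> R) (j : 'I_d) :
  (forall k, k <> j -> F k = 0) -> sumI F = F j.
Proof.
move=> H; have := @sumI_diff d F (fun _ => 0) j H.
have -> : sumI (fun _ : 'I_d => 0) = 0.
  rewrite /sumI; elim: (enum 'I_d) => //= a s ->; lra.
lra.
Qed.

Lemma diff_1d (d : nat) (f : vec d -> R) (y : vec d) (j : 'I_d) (t : R) :
  differentiable_at f (upd y j t) ->
  exists l, derivable_pt_lim (fun s => f (upd y j s)) t l.
Proof.
move=> [v Hv]; exists (v j) => eps Heps.
have [delta [Hd H]] := Hv (eps / 2) ltac:(lra).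
exists (mkposreal delta Hd) => h Hh0 Hhd /=.
pose hv : vec d := fun k => if k == j then h else 0.
have Hb : forall k, Rabs (hv k) < delta.
  move=> k; rewrite /hv; case: (k == j) => //; rewrite Rabs_R0; lra.
have := H hv Hb.
have -> : (fun k => upd y j t k + hv k) = upd y j (t + h).
  apply: functional_extensionality => k; rewrite /upd /hv; case: (k == j); lra.
have -> : inner v hv = v j * h.
  rewrite /inner (@sumI_single d _ j) /hv ?eqxx //.
  by move=> k Hk; case: eqP => // _; lra.
have -> : sumI (fun k => Rabs (hv k)) = Rabs h.
  rewrite (@sumI_single d _ j) /hv ?eqxx //.
  by move=> k Hk; case: eqP => // _; rewrite Rabs_R0.
move=> Hle.
have Hh : 0 < Rabs h by apply: Rabs_pos_lt.
have -> : (f (upd y j (t + h)) - f (upd y j t)) / h - v j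
  = (f (upd y j (t + h)) - f (upd y j t) - v j * h) / h by field.
rewrite /Rdiv Rabs_mult Rabs_inv.
apply (Rmult_lt_reg_r (Rabs h)) => //.
rewrite Rmult_assoc Rinv_l; last lra.
rewrite Rmult_1_r; nra.
Qed.

Lemma bound_lt (phi : R -> R) (C a b : R) :
  (forall t, exists l, derivable_pt_lim phi t l) ->
  (forall t l, derivable_pt_lim phi t l -> Rabs l < C) ->
  a < b -> Rabs (phi b - phi a) < C * (b - a).
Proof.
move=> Hd HC Hab.
pose phi' := fun t => proj1_sig (constructive_indefinite_description _ (Hd t)).
have Hp : forall t, derivable_pt_lim phi t (phi' t).
  move=> t; rewrite /phi'; by case: (constructive_indefinite_description _ (Hd t)).
have [c [Hc _]] := MVT_cor2 phi phi' a b Hab (fun c _ => Hp c).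
rewrite Hc Rabs_mult (Rabs_right (b - a)); last lra.
apply Rmult_lt_compat_r; [lra | exact (HC _ _ (Hp c))].
Qed.

Lemma bound_1d (phi : R -> R) (C a b : R) :
  (forall t, exists l, derivable_pt_lim phi t l) ->
  (forall t l, derivable_pt_lim phi t l -> Rabs l < C) ->
  a <> b -> Rabs (phi b - phi a) < C * Rabs (b - a).
Proof.
move=> Hd HC Hab.
case: (Rlt_or_le a b) => H.
- rewrite (Rabs_right (b - a)); last lra. by apply bound_lt.
- rewrite Rabs_minus_sym (Rabs_left1 (b - a)); last lra.
  have -> : - (b - a) = a - b by ring. apply bound_lt => //; lra.
Qed.

Lemma upd_upd (d : nat) (y : vec d) j a b : upd (upd y j a) j b = upd y j b.
Proof. apply: functional_extensionality => k; rewrite /upd; by case: (k == j). Qed.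

Lemma upd_id (d : nat) (y : vec d) j : upd y j (y j) = y.
Proof. apply: functional_extensionality => k; rewrite /upd; by case: eqP => [->|]. Qed.

Lemma upd_at (d : nat) (y : vec d) j a : upd y j a j = a.
Proof. by rewrite /upd eqxx. Qed.

Lemma key (d : nat) (f : vec d -> R) (j : 'I_d) (C : R) (y : vec d) :
  differentiable f -> weakly_invariant f j C ->
  Rabs (f y - f (upd y j 0)) <= C * Rabs (y j) /\
  (y j <> 0 -> Rabs (f y - f (upd y j 0)) < C * Rabs (y j)).
Proof.
move=> Hf Hw.
pose phi := fun t => f (upd y j t).
have Hd : forall t, exists l, derivable_pt_lim phi t l.
  move=> t; exact: diff_1d (Hf _).
have HC : forall t l, derivable_pt_lim phi t l -> Rabs l < C.
  move=> t l H; apply: (Hw (upd y j t)).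
  have E : (fun s => f (upd (upd y j t) j s)) = phi.
    by apply: functional_extensionality => s; rewrite upd_upd.
  by rewrite E upd_at.
have Hs : y j <> 0 -> Rabs (f y - f (upd y j 0)) < C * Rabs (y j).
  move=> Hne.
  have := @bound_1d phi C 0 (y j) Hd HC (fun E => Hne (esym E)).
  by rewrite /phi upd_id Rminus_0_r.
split => //.
case: (Req_dec (y j) 0) => [E|Hne]; last by apply: Rlt_le; apply: Hs.
have -> : upd y j 0 = y by rewrite -E upd_id.
rewrite Rminus_eq_0 Rabs_R0 E Rabs_R0; lra.
Qed.

Lemma sumN_add n F G : sumN n (fun i => F i + G i) = sumN n F + sumN n G.
Proof. elim: n => /= [|n ->]; lra. Qed.

Lemma sumN_scal n c F : sumN n (fun i => c * F i) = c * sumN n F.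
Proof. elim: n => /= [|n ->]; lra. Qed.

Lemma sumN_le n F G : (forall i, F i <= G i) -> sumN n F <= sumN n G.
Proof. move=> H; elim: n => /= [|n IH]; [lra | have := H n; lra]. Qed.

Lemma sumN_lt n F G (x : nat -> R) : (forall i, F i <= G i) ->
  (forall i, x i <> 0 -> F i < G i) -> 0 < sumN n (fun i => x i ^ 2) ->
  sumN n F < sumN n G.
Proof.
move=> H Hs; elim: n => /= [|n IH]; first lra.
case: (Req_dec (x n) 0) => [E|Hne].
  rewrite E /= => Hp; have := IH ltac:(lra); have := H n; lra.
move=> _; have := @sumN_le n F G H; have := Hs n Hne; lra.
Qed.

Lemma term_ineq (d : nat) (f : vec d -> R) (j : 'I_d) (C lam : R) (g x : vec d) :
  differentiable f -> weakly_invariant f j C -> 0 <= g j ->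
  let T h := Rabs (f x - f (hadamard h x)) + lam * inner (hadamard h x) x in
  T (upd g j 0) + ((g j * lam) * (x j ^ 2) + (- (g j * C)) * Rabs (x j)) <= T g /\
  (x j <> 0 -> 0 < g j ->
   T (upd g j 0) + ((g j * lam) * (x j ^ 2) + (- (g j * C)) * Rabs (x j)) < T g).
Proof.
move=> Hf Hw Hg T.
pose y := hadamard g x.
have Hy' : hadamard (upd g j 0) x = upd y j 0.
  apply: functional_extensionality => k; rewrite /hadamard /upd /y /hadamard.
  case: (k == j); ring.
have Hin : inner y x - inner (hadamard (upd g j 0) x) x = g j * x j * x j.
  rewrite /inner (@sumI_diff d _ _ j).
    by rewrite /y /hadamard /upd eqxx; ring.
  by move=> k Hk; rewrite /hadamard /upd; case: eqP.
have [K1 K2] := @key d f j C y Hf Hw.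
have Hyj : y j = g j * x j by [].
have Habs : Rabs (y j) = g j * Rabs (x j).
  by rewrite Hyj Rabs_mult (Rabs_right (g j)) //; lra.
rewrite Habs in K1 K2.
have Htri : Rabs (f x - f (upd y j 0)) <= Rabs (f x - f y) + Rabs (f y - f (upd y j 0)).
  have -> : f x - f (upd y j 0) = (f x - f y) + (f y - f (upd y j 0)) by ring.
  exact: Rabs_triang.
have Hsq : x j ^ 2 = x j * x j by ring.
rewrite Hy' in Hin; rewrite /T Hy' -/y Hsq.
split.
  have Ha := Rabs_pos (x j); nra.
move=> Hx Hgp.
have K := K2 ltac:(by move=> E; case: (Rmult_integral _ _ E); lra).
nra.
Qed.

Theorem theorem1 (d n : nat) (f : vec d -> R) (X : nat -> vec d) (j : 'I_d)
    (C lam : R) :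
  differentiable f ->
  0 < sumN n (fun i => (X i j) ^ 2) ->
  0 < C ->
  weakly_invariant f j C ->
  0 < lam ->
  lam >= C * (sumN n (fun i => Rabs (X i j)) / sumN n (fun i => (X i j) ^ 2)) ->
  forall g : vec d, global_minimizer n f X lam g -> g j = 0.
Proof.
move=> Hf Hpos HC Hw Hlam Hge g [Hbox Hmin].
have [Hg0 Hg1] := Hbox j.
case: (Req_dec (g j) 0) => // Hne; exfalso.
have Hgp : 0 < g j by lra.
pose g' := upd g j 0.
have Hbox' : in_box g'.
  by move=> k; rewrite /g' /upd; case: (k == j); [lra | apply: Hbox].
have Hm := Hmin g' Hbox'.
pose S1 := sumN n (fun i => Rabs (X i j)).
pose S2 := sumN n (fun i => (X i j) ^ 2).
have HS2 : 0 < S2 by [].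
have HS : C * S1 <= lam * S2.
  have := Hge; rewrite -/S1 -/S2 => H.
  have E : C * (S1 / S2) * S2 = C * S1 by field; lra.
  rewrite -E; apply: Rmult_le_compat_r; lra.
pose T h i := Rabs (f (X i) - f (hadamard h (X i))) + lam * inner (hadamard h (X i)) (X i).
pose b i := T g' i + ((g j * lam) * (X i j ^ 2) + (- (g j * C)) * Rabs (X i j)).
have Hlt : sumN n b < sumN n (T g).
  apply: (@sumN_lt n b (T g) (fun i => X i j)) => //.
    by move=> i; have [H _] := @term_ineq d f j C lam g (X i) Hf Hw Hg0.
  by move=> i Hx; have [_ H] := @term_ineq d f j C lam g (X i) Hf Hw Hg0; apply: H.
have Hb : sumN n b = sumN n (T g') + (g j * lam * S2 + - (g j * C) * S1).
  rewrite /b sumN_add sumN_add sumN_scal sumN_scal //.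
have Hn : (0 < n)%nat by case: (n) Hpos => //= ; lra.
have HnR : 0 < / INR n by apply: Rinv_0_lt_compat; apply: lt_0_INR; apply/ltP.
move: Hm; rewrite /MIND_loss -/(T g) -/(T g').
have : sumN n (T g') < sumN n (T g) by nra.
move=> H1 H2.
have := Rmult_lt_compat_l _ _ _ HnR H1.
rewrite /T in H2 *. lra.
Qed.
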